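(* Let $G$ be a 2-arc-colored directed multigraph. If $C$ is a minimal PC Euler subgraph of $G$, then for every vertex $v\in V(C)$, $d^+_{1,C}(v)\le 1$ and $d^+_{2,C}(v)\le 1$.
   Context: $G$ has an arbitrary arc coloring $\phi:A(G)\to\{1,2\}$. Trails are directed walks without repeated arcs; a closed trail is properly colored (PC) if every two consecutive arcs, including the last and first arcs, have different colors. A (multi)digraph is PC Euler if it has a PC closed trail containing all of its arcs. A PC Euler subgraph of $G$ is a subgraph (with at least one arc) that is PC Euler; it is minimal if no proper subgraph of it is PC Euler. $d^+_{i,C}(v)$ is the number of arcs of color $i$ in $C$ leaving $v$. *)

(* Defs.v *)
From mathcomp Require Import all_boot.
Set Implicit Arguments. Unset Strict Implicit. Unset Printing Implicit Defensive.

(* A finite directed multigraph G: vertex type V, arc type A (both finite),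
   each arc a goes from [tl a] to [hd a] (loops and parallel arcs allowed).
   A 2-arc-coloring is [col : A -> 'I_2] (color 1 <-> ord 0, color 2 <-> ord 1). *)

Section PC.
Variables (V A : finType) (tl hd : A -> V) (col : A -> 'I_2).

Definition pc_step (a b : A) : bool := (hd a == tl b) && (col a != col b).

Definition pc_closed_trail (s : seq A) : bool :=
  [&& s != [::], uniq s & cycle pc_step s].

Definition pc_euler (S : {set A}) : Prop :=
  exists s : seq A, pc_closed_trail s /\ [set a in s] = S.

Definition minimal_pc_euler (S : {set A}) : Prop :=
  pc_euler S /\ forall S' : {set A}, S' \proper S -> ~ pc_euler S'.

Definition outdeg_col (S : {set A}) (i : 'I_2) (v : V) : nat :=
  #|[set a in S | (tl a == v) && (col a == i)]|.

End PC.

(* Main.v *)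
Require Import Defs.
From mathcomp Require Import all_boot.

Lemma key (V A : finType) (tl hd : A -> V) (col : A -> 'I_2) (C : {set A}) :
  minimal_pc_euler tl hd col C -> forall a b, a \in C -> b \in C -> a != b ->
  tl a = tl b -> col a = col b -> False.
Proof.
move=> [[s [Hs HsC]] Hmin] a b aC bC ab Htl Hcol.
move: Hs; rewrite /pc_closed_trail => /and3P [_ us cs].
have as_ : a \in s by rewrite -HsC inE in aC.
have bs : b \in s by rewrite -HsC inE in bC.
case/splitPr: as_ HsC us cs bs => s1 s2 HsC us cs bs.
have R : rot (size s1) (s1 ++ a :: s2) = a :: s2 ++ s1 by rewrite rot_size_cat.
have cs' : cycle (pc_step tl hd col) (a :: s2 ++ s1).
  by rewrite -R rot_cycle.
have us' : uniq (a :: s2 ++ s1) by rewrite -R rot_uniq.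
have bt : b \in s2 ++ s1.
  by move: bs; rewrite !mem_cat !inE eq_sym (negbTE ab) /= orbC.
have memE : forall x, (x \in s1 ++ a :: s2) = (x \in a :: s2 ++ s1).
  by move=> x; rewrite -R mem_rot.
move: cs' us' memE; case/splitPr: bt => t1 t2 cs' us' memE.
apply: (Hmin [set x in a :: t1]).
  rewrite properE; apply/andP; split.
    apply/subsetP => x; rewrite [x \in [set _ in _]]inE -HsC [x \in [set _ in _]]inE memE => H.
    by move: H; rewrite !inE !mem_cat => /orP [->|->]; rewrite ?orbT.
  apply/subsetPn; exists b; first by [].
  rewrite inE; move: us'; rewrite -cat_cons cat_uniq => /and3P [_ H _].
  by apply: contra H => H; apply/hasP; exists b; rewrite ?inE ?eqxx.
exists (a :: t1); split => //.
rewrite /pc_closed_trail /=; apply/andP; split.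
  by move: us'; rewrite -cat_cons cat_uniq => /andP [].
rewrite rcons_path; move: cs'; rewrite /cycle /= rcons_cat cat_path => /andP [-> /=].
rewrite /pc_step => /andP [/andP [H1 H2] _].
by rewrite Htl Hcol H1 H2.
Qed.

Theorem lemma2 (V A : finType) (tl hd : A -> V) (col : A -> 'I_2)
    (C : {set A}) :
  minimal_pc_euler tl hd col C ->
  forall v : V,
    outdeg_col tl col C ord0 v <= 1 /\ outdeg_col tl col C (@Ordinal 2 1 isT) v <= 1.
Proof.
move=> HC v.
have gen : forall i, outdeg_col tl col C i v <= 1.
  move=> i; rewrite leqNgt; apply/negP => /card_gt1P [x [y [Hx Hy xy]]].
  move: Hx Hy; rewrite !inE => /andP [xC /andP [/eqP tx /eqP cx]] /andP [yC /andP [/eqP ty /eqP cy]].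
  exact: (@key _ _ _ _ _ _ HC _ _ xC yC xy (etrans tx (esym ty)) (etrans cx (esym cy))).
by split; apply: gen.
Qed.
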